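(* Let $R$ be a discrete valuation ring with field of fractions $K$ and uniformizer $\pi$, $V$ a finite-dimensional $K$-vector space, and $B$ a nondegenerate $K$-bilinear form on $V$ with $B(x,y)=\epsilon B(y,x)$ for all $x,y$, where $\epsilon=\pm1$. Let $L$ be a lattice of $V$ and $L'$ its dual lattice. Then $m_-(L,L')$ is an almost self-dual lattice, and its dual lattice is $m_+(L,L')$.
   Context: A lattice of $V$ is a free $R$-submodule $L$ with $K\otimes_R L\to V$ an isomorphism. The dual of a lattice $L$ is $L'=\{x\in V: B(x,y)\in R\ \forall y\in L\}$. A lattice $L$ is almost self-dual if $\pi L'\subset L\subset L'$. $m_-(L,M)=\sum_{n\in\mathbb Z}(\pi^nL\cap\pi^{-n}M)$ (submodule generated) and $m_+(L,M)=\bigcap_{n\in\mathbb Z}(\pi^nL+\pi^{-n}M)$. *)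

(* Defs.v *)
From HB Require Import structures.
From mathcomp Require Import all_boot all_order all_algebra.
Set Implicit Arguments. Unset Strict Implicit. Unset Printing Implicit Defensive.
Import Order.TTheory GRing.Theory Num.Theory.
Local Open Scope ring_scope.

Section Defs.
Variables (K : fieldType) (V : vectType K).

Definition is_dvr_with_uniformizer (R : K -> Prop) (pi : K) : Prop :=
  [/\ R 1, (forall x y, R x -> R y -> R (x - y)),
      (forall x y, R x -> R y -> R (x * y)),
      (R pi /\ ~ R (pi^-1))
    & forall x, x != 0 -> exists (n : int) (u : K), [/\ R u, R u^-1 & x = u * pi ^ n]].

Definition bilinear_form (B : V -> V -> K) : Prop :=
  (forall a x y z, B (a *: x + y) z = a * B x z + B y z) /\
  (forall a x y z, B z (a *: x + y) = a * B z x + B z y).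

Definition nondegenerate_form (B : V -> V -> K) : Prop :=
  (forall x, (forall y, B x y = 0) -> x = 0) /\
  (forall y, (forall x, B x y = 0) -> y = 0).

(* A lattice: a free R-submodule L of V such that K (x)_R L -> V is an
   isomorphism, i.e. L is the R-span of some K-basis of V, the basis being an
   R-basis of L. *)
Definition lattice (R : K -> Prop) (L : V -> Prop) : Prop :=
  exists b : (\dim {: V}).-tuple V, basis_of fullv b /\
    forall x, L x <-> exists c : 'I_(\dim {: V}) -> K,
      (forall i, R (c i)) /\ x = \sum_i c i *: tnth b i.

Definition dual (R : K -> Prop) (B : V -> V -> K) (L : V -> Prop) : V -> Prop :=
  fun x => forall y, L y -> R (B x y).

Definition scale_set (a : K) (L : V -> Prop) : V -> Prop :=
  fun x => exists y, L y /\ x = a *: y.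

Definition subset_of (L M : V -> Prop) : Prop := forall x, L x -> M x.

Definition almost_self_dual (R : K -> Prop) (pi : K) (B : V -> V -> K)
  (L : V -> Prop) : Prop :=
  lattice R L /\ subset_of (scale_set pi (dual R B L)) L /\ subset_of L (dual R B L).

Definition R_span (R : K -> Prop) (S : V -> Prop) : V -> Prop :=
  fun x => exists (k : nat) (r : 'I_k -> K) (y : 'I_k -> V),
    (forall i, R (r i) /\ S (y i)) /\ x = \sum_(i < k) r i *: y i.

Definition m_minus (R : K -> Prop) (pi : K) (L M : V -> Prop) : V -> Prop :=
  R_span R (fun x => exists n : int,
    scale_set (pi ^ n) L x /\ scale_set (pi ^ (- n)) M x).

Definition m_plus (pi : K) (L M : V -> Prop) : V -> Prop :=
  fun x => forall n : int, exists y z,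
    [/\ scale_set (pi ^ n) L y, scale_set (pi ^ (- n)) M z & x = y + z].

End Defs.

(* Main.v *)
Require Import Defs.
From HB Require Import structures.
From mathcomp Require Import all_boot all_order all_algebra all_fingroup.
From mathcomp Require Import zify.
Set Implicit Arguments. Unset Strict Implicit. Unset Printing Implicit Defensive.
Import Order.TTheory GRing.Theory Num.Theory.
Local Open Scope ring_scope.

Section RArith.
Variables (K : fieldType) (R : K -> Prop) (pi : K).
Hypothesis dvr : is_dvr_with_uniformizer R pi.

Lemma R1 : R 1. Proof. by case: dvr. Qed.
Lemma RB x y : R x -> R y -> R (x - y). Proof. by case: dvr => _ h _ _ _; apply: h. Qed.
Lemma RM x y : R x -> R y -> R (x * y). Proof. by case: dvr => _ _ h _ _; apply: h. Qed.
Lemma R0 : R 0. Proof. by rewrite -(subrr 1); apply: RB; apply: R1. Qed.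
Lemma RN x : R x -> R (- x). Proof. by move=> h; rewrite -sub0r; apply: RB => //; apply: R0. Qed.
Lemma RD x y : R x -> R y -> R (x + y).
Proof. by move=> hx hy; rewrite -(opprK y); apply: RB => //; apply: RN. Qed.
Lemma Rsum (I : Type) (r : seq I) (P : pred I) (F : I -> K) :
  (forall i, P i -> R (F i)) -> R (\sum_(i <- r | P i) F i).
Proof. move=> h; apply: big_ind => //; [exact: R0 | exact: RD]. Qed.
Lemma Rpi : R pi. Proof. by case: dvr => _ _ _ []. Qed.
Lemma pi_neq0 : pi != 0.
Proof. apply/eqP => p0; case: dvr => _ _ _ [_ h] _; apply: h; rewrite p0 invr0; exact: R0. Qed.
Lemma Rexpn (k : nat) : R (pi ^+ k).
Proof. elim: k => [|k IH]; first exact: R1. by rewrite exprS; apply: RM => //; apply: Rpi. Qed.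
Lemma Rexpz (k : int) : 0 <= k -> R (pi ^ k).
Proof. by case: k => // k _; apply: Rexpn. Qed.
Lemma expzD (a b : int) : pi ^ (a + b) = pi ^ a * pi ^ b.
Proof. by rewrite expfzDr // pi_neq0. Qed.
Lemma expz_neq0 (a : int) : pi ^ a != 0.
Proof. by rewrite expfz_neq0 // pi_neq0. Qed.
Lemma expzN (a : int) : pi ^ (- a) = (pi ^ a)^-1.
Proof. by rewrite invr_expz. Qed.
Lemma expzNK (a : int) : pi ^ (- a) * pi ^ a = 1.
Proof. by rewrite -expzD addNr expr0z. Qed.
Lemma expzKN (a : int) : pi ^ a * pi ^ (- a) = 1.
Proof. by rewrite -expzD addrN expr0z. Qed.

Lemma Rwle (a b : int) x : a <= b -> R (pi ^ a * x) -> R (pi ^ b * x).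
Proof.
move=> ab h; have -> : pi ^ b * x = pi ^ (b - a) * (pi ^ a * x).
  by rewrite mulrA -expzD addrNK.
by apply: RM => //; apply: Rexpz; rewrite subr_ge0.
Qed.

Lemma Rdecomp x : x != 0 -> exists (k : int) (u : K), [/\ R u, R u^-1 & x = u * pi ^ k].
Proof. by case: dvr => _ _ _ _; apply. Qed.

Lemma Rtotal x y : x != 0 -> y != 0 -> R (x / y) \/ R (y / x).
Proof.
move=> /Rdecomp [a [u [ru rui ->]]] /Rdecomp [b [v [rv rvi ->]]].
have [ab|ba] := lerP b a.
  left; rewrite invfM mulrACA -expzN -expzD; apply: RM; first exact: RM.
  by apply: Rexpz; rewrite subr_ge0.
right; rewrite invfM mulrACA -expzN -expzD; apply: RM; first exact: RM.
by apply: Rexpz; rewrite subr_ge0 ltW.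
Qed.

Lemma Rpivot (I : finType) (f : I -> K) :
  (forall i, f i = 0) \/ exists i, f i != 0 /\ forall j, R (f j / f i).
Proof.
suff: forall s : seq I, (forall i, i \in s -> f i = 0) \/
        exists i, f i != 0 /\ forall j, j \in s -> R (f j / f i).
  case/(_ (enum I)) => [h|[i [fi h]]]; [left|right] => *.
    by apply: h; rewrite mem_enum.
  by exists i; split => // j; apply: h; rewrite mem_enum.
elim=> [|a s [IH|[i [fi IH]]]]; first by left.
- have [fa0|fa] := eqVneq (f a) 0.
    by left => i; rewrite inE => /orP [/eqP ->|/IH].
  right; exists a; split => // j; rewrite inE => /orP [/eqP ->|/IH ->].
    by rewrite divff //; apply: R1.
  by rewrite mul0r; apply: R0.
- have [fa0|fa] := eqVneq (f a) 0.
    right; exists i; split => // j; rewrite inE => /orP [/eqP ->|/IH //].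
    by rewrite fa0 mul0r; apply: R0.
  have [h|h] := Rtotal fa fi.
    right; exists i; split => // j; rewrite inE => /orP [/eqP ->|/IH //]; done.
  right; exists a; split => // j; rewrite inE => /orP [/eqP ->|/IH hj].
    by rewrite divff //; apply: R1.
  have -> : f j / f a = (f j / f i) * (f i / f a) by rewrite mulrA divfK.
  exact: RM.
Qed.
End RArith.

Section Smith.
Variables (K : fieldType) (R : K -> Prop) (pi : K).
Hypothesis dvr : is_dvr_with_uniformizer R pi.

Definition Rmx m n (A : 'M[K]_(m, n)) := forall i j, R (A i j).

Lemma Rmx_mul m n p (A : 'M[K]_(m, n)) (B : 'M[K]_(n, p)) :
  Rmx A -> Rmx B -> Rmx (A *m B).
Proof. move=> hA hB i j; rewrite mxE; apply: (Rsum dvr) => k _; exact: (RM dvr). Qed.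

Lemma Rmx_opp m n (A : 'M[K]_(m, n)) : Rmx A -> Rmx (- A).
Proof. by move=> hA i j; rewrite mxE; apply: (RN dvr). Qed.

Lemma Rmx0 m n : Rmx (0 : 'M[K]_(m, n)).
Proof. by move=> i j; rewrite mxE; apply: (R0 dvr). Qed.

Lemma Rmx1 n : Rmx (1%:M : 'M[K]_n).
Proof. by move=> i j; rewrite mxE; case: (_ == _); rewrite ?mulr1n ?mulr0n; [apply: (R1 dvr) | apply: (R0 dvr)]. Qed.

Lemma Rmx_perm n (s : 'S_n) : Rmx (perm_mx s).
Proof. by move=> i j; rewrite !mxE; case: (_ == _); rewrite ?mulr1n ?mulr0n; [apply: (R1 dvr) | apply: (R0 dvr)]. Qed.

Lemma Rmx_block m1 m2 n1 n2 (A : 'M[K]_(m1, n1)) (B : 'M[K]_(m1, n2))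
  (C : 'M[K]_(m2, n1)) (D : 'M[K]_(m2, n2)) :
  Rmx A -> Rmx B -> Rmx C -> Rmx D -> Rmx (block_mx A B C D).
Proof.
move=> hA hB hC hD i j; rewrite -(splitK i) -(splitK j).
case: (split i) => a; case: (split j) => b /=.
- by rewrite block_mxEul.
- by rewrite block_mxEur.
- by rewrite block_mxEdl.
- by rewrite block_mxEdr.
Qed.

Definition smith_concl n (T : 'M[K]_n) :=
  exists P Pi S Si : 'M[K]_n, exists d : 'rV[K]_n,
  [/\ Rmx P, Rmx Pi, Rmx S, Rmx Si &
      [/\ P *m Pi = 1%:M, S *m Si = 1%:M & T = P *m diag_mx d *m S]].

Lemma smith_pivot n (T : 'M[K]_(1 + n)) :
  (forall A : 'M[K]_n, smith_concl A) ->
  T 0 0 != 0 -> (forall k l, R (T k l / T 0 0)) -> smith_concl T.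
Proof.
move=> IH tn0 hT; set t := T 0 0 in tn0 hT.
set r := ursubmx T; set c := dlsubmx T; set A := drsubmx T.
have ha : ulsubmx T = t%:M.
  by rewrite [ulsubmx T]mx11_scalar !mxE lshift0.
have [P' [Pi' [S' [Si' [d' [hP' hPi' hS' hSi' [ePP' eSS' eA]]]]]]] :=
  IH (A - t^-1 *: (c *m r)).
have Rc : Rmx (t^-1 *: c).
  by move=> i j; rewrite !mxE mulrC; apply: hT.
have Rr : Rmx (t^-1 *: r).
  by move=> i j; rewrite !mxE mulrC; apply: hT.
exists (block_mx 1%:M 0 (t^-1 *: c) P').
exists (block_mx 1%:M 0 (- (Pi' *m (t^-1 *: c))) Pi').
exists (block_mx 1%:M (t^-1 *: r) 0 S').
exists (block_mx 1%:M (- ((t^-1 *: r) *m Si')) 0 Si').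
exists (row_mx t%:M d'); split.
- by apply: Rmx_block => //; [apply: Rmx1 | apply: Rmx0].
- by apply: Rmx_block => //; [apply: Rmx1 | apply: Rmx0 | apply: Rmx_opp; apply: Rmx_mul].
- by apply: Rmx_block => //; [apply: Rmx1 | apply: Rmx0].
- by apply: Rmx_block => //; [apply: Rmx1 | apply: Rmx_opp; apply: Rmx_mul | apply: Rmx0].
split.
- rewrite mulmx_block !mulmx0 !mul0mx !mulmx1 !addr0 ePP' mulmxN mulmxA ePP' mul1mx.
  by rewrite subrr add0r -scalar_mx_block.
- rewrite mulmx_block !mulmx0 !mul0mx !mulmx1 !add0r !addr0 eSS' mul1mx.
  by rewrite addNr -scalar_mx_block.
- rewrite diag_mx_row.
  have -> : diag_mx (t%:M : 'rV[K]_1) = t%:M.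
    by apply/matrixP => i j; rewrite !ord1 !mxE.
  rewrite !mulmx_block !mulmx0 !mul0mx !mulmx1 !mul1mx !addr0 !add0r !mul0mx.
  rewrite addr0 mul_scalar_mx mul_mx_scalar !scalerA !mulfV // !scale1r.
  by rewrite -eA scalemxAr addrC subrK -ha submxK.
Qed.

Lemma smith n (T : 'M[K]_n) : smith_concl T.
Proof.
elim: n T => [|n IH] T.
  exists 1%:M, 1%:M, 1%:M, 1%:M, 0; split; try exact: Rmx1.
  split; rewrite ?mulmx1 //; by apply/matrixP => [[]].
have [h0|[[i0 j0] /= [tn0 hT]]] := Rpivot dvr (fun p : 'I_n.+1 * 'I_n.+1 => T p.1 p.2).
  exists 1%:M, 1%:M, 1%:M, 1%:M, 0; split; try exact: Rmx1.
  split; rewrite ?mulmx1 //.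
  by rewrite mul1mx; apply/matrixP => i j; rewrite !mxE (h0 (i, j)) mul0rn.
pose T1 := xrow i0 0 (xcol j0 0 T).
have eT1 k l : T1 k l = T (tperm i0 0 k) (tperm j0 0 l) by rewrite !mxE.
have := @smith_pivot n T1 IH.
rewrite eT1 !tpermR => /(_ tn0) [].
  by move=> k l; rewrite eT1; apply: (hT (_, _)).
move=> P1 [Pi1 [S1 [Si1 [d [hP hPi hS hSi [ePP eSS eT]]]]]].
exists (tperm_mx i0 0 *m P1), (Pi1 *m tperm_mx i0 0).
exists (S1 *m tperm_mx j0 0), (tperm_mx j0 0 *m Si1), d; split.
- by apply: Rmx_mul => //; apply: Rmx_perm.
- by apply: Rmx_mul => //; apply: Rmx_perm.
- by apply: Rmx_mul => //; apply: Rmx_perm.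
- by apply: Rmx_mul => //; apply: Rmx_perm.
have tt (a b : 'I_n.+1) : tperm_mx a b *m tperm_mx a b = 1%:M.
  by rewrite -perm_mxM tperm2 perm_mx1.
split.
- by rewrite mulmxA -(mulmxA _ P1) ePP mulmx1 tt.
- by rewrite mulmxA -(mulmxA _ _ (tperm_mx j0 0)) tt mulmx1 eSS.
- rewrite !mulmxA -(mulmxA _ P1) -(mulmxA _ (P1 *m _)) -eT /T1 xrowE xcolE.
  by rewrite !mulmxA tt mul1mx -mulmxA tt mulmx1.
Qed.
End Smith.

Section Bil.
Variables (K : fieldType) (V : vectType K) (B : V -> V -> K).
Hypothesis bil : bilinear_form B.

Lemma Bl0 z : B 0 z = 0.
Proof.
have := bil.1 1 0 0 z; rewrite scaler0 addr0 mul1r => h.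
by apply: (@addrI _ (B 0 z)); rewrite addr0 -h.
Qed.
Lemma BlD x y z : B (x + y) z = B x z + B y z.
Proof. by rewrite -{1}(scale1r x) bil.1 mul1r. Qed.
Lemma BlZ a x z : B (a *: x) z = a * B x z.
Proof. by rewrite -(addr0 (a *: x)) bil.1 Bl0 addr0. Qed.
Lemma Bl_sum (I : Type) (r : seq I) (P : pred I) (F : I -> V) z :
  B (\sum_(i <- r | P i) F i) z = \sum_(i <- r | P i) B (F i) z.
Proof. exact: (big_morph (fun x => B x z) (fun x y => BlD x y z) (Bl0 z)). Qed.
Lemma Br0 z : B z 0 = 0.
Proof.
have := bil.2 1 0 0 z; rewrite scaler0 addr0 mul1r => h.
by apply: (@addrI _ (B z 0)); rewrite addr0 -h.
Qed.
Lemma BrD x y z : B z (x + y) = B z x + B z y.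
Proof. by rewrite -{1}(scale1r x) bil.2 mul1r. Qed.
Lemma BrZ a x z : B z (a *: x) = a * B z x.
Proof. by rewrite -(addr0 (a *: x)) bil.2 Br0 addr0. Qed.
Lemma Br_sum (I : Type) (r : seq I) (P : pred I) (F : I -> V) z :
  B z (\sum_(i <- r | P i) F i) = \sum_(i <- r | P i) B z (F i).
Proof. exact: (big_morph (fun x => B z x) (fun x y => BrD x y z) (Br0 z)). Qed.
End Bil.

Section Main.
Variables (K : fieldType) (V : vectType K) (R : K -> Prop) (pi : K)
  (B : V -> V -> K) (eps : K) (L : V -> Prop).
Hypothesis dvr : is_dvr_with_uniformizer R pi.
Hypothesis bil : bilinear_form B.
Hypothesis nd : nondegenerate_form B.
Hypothesis heps : eps = 1 \/ eps = -1.
Hypothesis sym : forall x y, B x y = eps * B y x.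
Local Notation n := (\dim {: V}).
Variables (e : 'I_n -> V) (m : 'I_n -> int).
Definition E (c : 'I_n -> K) : V := \sum_i c i *: e i.
Hypothesis Esurj : forall x, exists c, x = E c.
Hypothesis Einj : forall c, E c = 0 -> forall i, c i = 0.
Hypothesis Lchar : forall c, L (E c) <-> forall i, R (c i).
Hypothesis L'char : forall c, dual R B L (E c) <-> forall i, R (pi ^ m i * c i).

Local Notation pz k := (pi ^ k).

Lemma Reps : R eps.
Proof. by case: heps => ->; [apply: (R1 dvr) | apply: (RN dvr); apply: (R1 dvr)]. Qed.

Lemma E_add c c' : E (fun i => c i + c' i) = E c + E c'.
Proof. by rewrite /E -big_split; apply: eq_bigr => i _; rewrite scalerDl. Qed.
Lemma E_scale a c : E (fun i => a * c i) = a *: E c.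
Proof. by rewrite /E scaler_sumr; apply: eq_bigr => i _; rewrite scalerA. Qed.
Lemma E_ext c c' : (forall i, c i = c' i) -> E c = E c'.
Proof. by move=> h; apply: eq_bigr => i _; rewrite h. Qed.
Lemma E_eq c c' : E c = E c' -> forall i, c i = c' i.
Proof.
move=> h i; apply/eqP; rewrite -subr_eq0; apply/eqP.
apply: (Einj (c := fun i => c i - c' i)).
rewrite (E_ext (c' := fun i => c i + (-1) * c' i)); last by move=> j; rewrite mulN1r.
by rewrite E_add E_scale h scaleN1r subrr.
Qed.

Lemma E_delta i a : E (fun j => if j == i then a else 0) = a *: e i.
Proof.
rewrite /E (bigD1 i) //= eqxx big1 ?addr0 // => j /negPf ->; exact: scale0r.
Qed.

Definition W (k : 'I_n -> int) (x : V) :=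
  exists c, x = E c /\ forall i, R (pz (k i) * c i).

Lemma W_E k c : W k (E c) <-> forall i, R (pz (k i) * c i).
Proof.
split => [[c' [h hc']] i|h]; last by exists c.
by rewrite (E_eq h).
Qed.

Lemma W_le k k' x : (forall i, k i <= k' i) -> W k x -> W k' x.
Proof. move=> hk [c [-> h]]; exists c; split => // i; exact: (Rwle dvr (hk i)). Qed.

Lemma W0 k : W k 0.
Proof.
exists (fun _ => 0); split; last by move=> i; rewrite mulr0; apply: (R0 dvr).
by rewrite /E big1 // => i _; rewrite scale0r.
Qed.

Lemma W_add k x y : W k x -> W k y -> W k (x + y).
Proof.
move=> [c [-> hc]] [c' [-> hc']]; exists (fun i => c i + c' i); split.
  by rewrite E_add.
by move=> i; rewrite mulrDr; apply: (RD dvr).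
Qed.

Lemma W_scale k a x : R a -> W k x -> W k (a *: x).
Proof.
move=> ha [c [-> hc]]; exists (fun i => a * c i); split; first by rewrite E_scale.
by move=> i; rewrite mulrCA; apply: (RM dvr).
Qed.

Lemma W_span k S x : R_span R S x -> (forall y, S y -> W k y) -> W k x.
Proof.
move=> [kk [r [y [hy ->]]]] hS; apply: big_ind; [exact: W0 | exact: W_add |].
move=> i _; have [hr hs] := hy i; apply: W_scale => //; exact: hS.
Qed.

Lemma W_scale_set k (a : int) x :
  scale_set (pz a) (W k) x <-> W (fun i => k i - a) x.
Proof.
split.
  move=> [y [[c [-> hc]] ->]]; rewrite -E_scale; apply/W_E => i.
  by rewrite mulrA -(expzD dvr) subrK.
move=> [c [-> hc]]; exists (E (fun i => pz (- a) * c i)); split.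
  apply/W_E => i; rewrite mulrA -(expzD dvr); exact: hc.
by rewrite -E_scale; apply: E_ext => i; rewrite mulrA (expzKN dvr) mul1r.
Qed.

Lemma Lset x : L x <-> W (fun _ => 0) x.
Proof.
have [c ->] := Esurj x; rewrite Lchar W_E.
by split => h i; move: (h i); rewrite expr0z mul1r.
Qed.

Lemma L'set x : dual R B L x <-> W m x.
Proof. by have [c ->] := Esurj x; rewrite L'char W_E. Qed.

Lemma scale_set_ext a (S S' : V -> Prop) x : (forall y, S y <-> S' y) ->
  (scale_set a S x <-> scale_set a S' x).
Proof. by move=> h; split => [[y [/h hy ->]]|[y [/h hy ->]]]; exists y. Qed.

Lemma scaleL (a : int) x : scale_set (pz a) L x <-> W (fun _ => 0 - a) x.
Proof. rewrite (scale_set_ext _ _ Lset); exact: W_scale_set. Qed.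

Lemma scaleL' (a : int) x : scale_set (pz a) (dual R B L) x <-> W (fun i => m i - a) x.
Proof. rewrite (scale_set_ext _ _ L'set); exact: W_scale_set. Qed.

Definition g i : int := (m i %/ 2)%Z.
Definition h i : int := m i - g i.
Lemma g_bounds i : 2 * g i <= m i /\ m i <= 2 * g i + 1.
Proof.
have := divz_eq (m i) 2; have := @modz_ge0 (m i) 2 isT; have := @ltz_mod (m i) 2 isT.
rewrite /g; set q := (m i %/ 2)%Z; set r := (m i %% 2)%Z => h1 h2 h3.
lia.
Qed.

Lemma h_bounds i : g i <= h i /\ h i <= g i + 1.
Proof. have := g_bounds i; rewrite /h; lia. Qed.

Definition Mset := m_minus R pi L (dual R B L).

Lemma W_delta k i a : R (pz (k i) * a) -> W k (a *: e i).
Proof.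
move=> ha; rewrite -E_delta; apply/W_E => j.
case: eqP => [->|_] //; rewrite mulr0; exact: (R0 dvr).
Qed.

Lemma Mchar x : Mset x <-> W g x.
Proof.
split.
  move=> hx; apply: (W_span hx) => y [nn [/scaleL h1 /scaleL' h2]].
  have [c ec] := Esurj y; rewrite ec in h1 h2 *.
  move/W_E: h1 => h1; move/W_E: h2 => h2; apply/W_E => i.
  have [le|lt] := lerP (0 - nn) (g i).
    exact: (Rwle dvr le (h1 i)).
  apply: (Rwle dvr _ (h2 i)); have := g_bounds i; lia.
move=> [c [-> hc]].
exists n, (fun i => pz (g i) * c i), (fun i => pz (- g i) *: e i); split.
  move=> i; split => //; exists (- g i); split.
    exists (e i); split => //; rewrite -(scale1r (e i)) -E_delta.
    by apply/Lchar => j; case: eqP => _; [apply: (R1 dvr) | apply: (R0 dvr)].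
  apply/scaleL'; apply: W_delta; rewrite -(expzD dvr); apply: (Rexpz dvr).
  have := g_bounds i; lia.
rewrite /E; apply: eq_bigr => i _; rewrite scalerA; congr (_ *: _).
by rewrite mulrAC (expzKN dvr) mul1r.
Qed.

Lemma hdef i : h i = m i - g i. Proof. by []. Qed.

Lemma Pchar x : m_plus pi L (dual R B L) x <-> W h x.
Proof.
split.
  move=> hx; have [c ec] := Esurj x; rewrite ec; apply/W_E => i.
  have [y [z [/scaleL hy /scaleL' hz exy]]] := hx (- h i).
  have [cy ey] := Esurj y; have [cz ez] := Esurj z.
  subst y z; rewrite ec -E_add in exy.
  move/W_E: hy => hy; move/W_E: hz => hz.
  rewrite (E_eq exy i) mulrDr; apply: (RD dvr).
    by apply: (Rwle dvr _ (hy i)); lia.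
  apply: (Rwle dvr _ (hz i)); have := hdef i; have := h_bounds i; lia.
move=> [c [-> hc]] nn.
exists (E (fun j => if h j <= - nn then c j else 0)).
exists (E (fun j => if h j <= - nn then 0 else c j)); split.
- apply/scaleL/W_E => j; case: ifP => H.
    by apply: (Rwle dvr _ (hc j)); lia.
  by rewrite mulr0; apply: (R0 dvr).
- apply/scaleL'/W_E => j; case: ifP => H.
    by rewrite mulr0; apply: (R0 dvr).
  apply: (Rwle dvr _ (hc j)); move/negbT: H; have := hdef j; have := g_bounds j; lia.
- rewrite -E_add; apply: E_ext => j; case: ifP => _; by rewrite ?addr0 ?add0r.
Qed.

Lemma Rdelta (i j : 'I_n) : R ((1%:M : 'M[K]_n) i j).
Proof. by rewrite mxE; case: (_ == _); rewrite ?mulr1n ?mulr0n; [apply: (R1 dvr) | apply: (R0 dvr)]. Qed.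

Definition H : 'M[K]_n := \matrix_(i, j) B (e i) (e j).

Lemma H_unit : H \in unitmx.
Proof.
rewrite -row_free_unit; apply: inj_row_free => v hv.
set x := E (fun i => v 0 i).
have hx j : B x (e j) = 0.
  have := congr1 (fun M : 'M[K]_(1, n) => M 0 j) hv; rewrite !mxE => <-.
  rewrite /x /E (Bl_sum bil); apply: eq_bigr => i _; by rewrite (BlZ bil) mxE.
have x0 : x = 0.
  apply: nd.1 => y; have [c ->] := Esurj y.
  by rewrite /E (Br_sum bil) big1 // => j _; rewrite (BrZ bil) hx mulr0.
by apply/rowP => i; rewrite mxE; apply: (Einj (c := fun i => v 0 i) x0 i).
Qed.

Definition Z := invmx H.
Lemma HZ : H *m Z = 1%:M. Proof. exact: mulmxV H_unit. Qed.

Lemma ZtH i l : \sum_j Z j i * B (e j) (e l) = eps * (1%:M : 'M[K]_n) l i.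
Proof.
rewrite -HZ mxE mulr_sumr; apply: eq_bigr => j _; rewrite sym mxE mulrCA.
by congr (_ * _); rewrite mulrC.
Qed.

Lemma Z2 i j : R (pz (m j) * Z j i).
Proof.
have : dual R B L (E (fun j => Z j i)).
  move=> y Ly; have [r ey] := Esurj y; subst y; move/Lchar: Ly => hr.
  rewrite /E (Br_sum bil); apply: (Rsum dvr) => l _; rewrite (BrZ bil) (Bl_sum bil).
  under eq_bigr do rewrite (BlZ bil).
  rewrite ZtH; apply: (RM dvr) => //; apply: (RM dvr); [exact: Reps | exact: Rdelta].
by move/L'char; apply.
Qed.

Lemma Z3 i j : Z j i = eps * Z i j.
Proof.
have ZtH' : Z^T *m H = eps%:M.
  apply/matrixP => a l; rewrite !mxE.
  under eq_bigr do rewrite !mxE.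
  rewrite ZtH !mxE eq_sym; case: (a == l); by rewrite ?mulr1n ?mulr0n ?mulr1 ?mulr0.
have : Z^T = eps *: Z by rewrite -[Z^T]mulmx1 -HZ mulmxA ZtH' mul_scalar_mx.
by move/(congr1 (fun M : 'M[K]_n => M i j)); rewrite !mxE.
Qed.

Lemma Dchar x : dual R B Mset x <-> W h x.
Proof.
split; last first.
  move/Pchar => hx y [kk [r [yy [hyy ->]]]].
  rewrite (Br_sum bil); apply: (Rsum dvr) => k _; rewrite (BrZ bil).
  have [hr [nn [[l [Ll eq1]] [l' [L'l' eq2]]]]] := hyy k.
  apply: (RM dvr) => //.
  have [x1 [x2 [[a [La ->]] [b [L'b ->]] ->]]] := hx nn.
  rewrite (BlD bil); apply: (RD dvr).
    rewrite eq2 (BlZ bil) (BrZ bil) mulrA (expzKN dvr) mul1r sym.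
    apply: (RM dvr); [exact: Reps | exact: L'l'].
  by rewrite eq1 (BlZ bil) (BrZ bil) mulrA (expzNK dvr) mul1r; apply: L'b.
move=> hx; have [c ec] := Esurj x; subst x; apply/W_E => i.
have hy j : R (pz (- g j) * B (E c) (e j)).
  have : Mset (pz (- g j) *: e j).
    apply/Mchar; apply: W_delta; rewrite (expzKN dvr); exact: (R1 dvr).
  by move/hx; rewrite (BrZ bil).
have ey j : B (E c) (e j) = \sum_l c l * B (e l) (e j).
  by rewrite /E (Bl_sum bil); apply: eq_bigr => l _; rewrite (BlZ bil).
have eci : c i = \sum_j B (E c) (e j) * Z j i.
  have : (\row_l c l) *m H *m Z = \row_l c l by rewrite -mulmxA HZ mulmx1.
  move/(congr1 (fun M : 'M[K]_(1, n) => M 0 i)); rewrite !mxE => <-.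
  apply: eq_bigr => j _; rewrite ey !mxE; congr (_ * _); apply: eq_bigr => l _.
  by rewrite !mxE.
rewrite eci mulr_sumr; apply: (Rsum dvr) => j _.
have -> : pz (h i) = pz (- g j) * pz (g j + h i) by rewrite -(expzD dvr) addKr.
rewrite mulrACA; apply: (RM dvr); first exact: hy.
have [le|lt] := lerP (g i) (g j).
  apply: (Rwle dvr (a := m i)); first by have := hdef i; lia.
  rewrite Z3 mulrCA; apply: (RM dvr); [exact: Reps | exact: Z2].
apply: (Rwle dvr (a := m j)); last exact: Z2.
have := hdef i; have := g_bounds i; have := g_bounds j; lia.
Qed.

Lemma main_concl : almost_self_dual R pi B Mset /\
  (forall x, dual R B Mset x <-> m_plus pi L (dual R B L) x).
Proof.
split; last by move=> x; rewrite Dchar Pchar.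
split; last split.
- exists [tuple pz (- g i) *: e i | i < n]; split.
    rewrite basisEfree size_tuple subvf leqnn !andbT; apply/freeP => k hk i.
    have : E (fun i => k i * pz (- g i)) = 0.
      rewrite -hk /E; apply: eq_bigr => j _.
      by rewrite -tnth_nth tnth_mktuple scalerA.
    move/Einj/(_ i)/eqP; rewrite mulf_eq0 (negPf (expz_neq0 dvr _)) orbF.
    by move/eqP.
  move=> x; rewrite Mchar; split.
    move=> [c [-> hc]]; exists (fun i => pz (g i) * c i); split => //.
    apply: eq_bigr => i _; rewrite tnth_mktuple scalerA; congr (_ *: _).
    by rewrite mulrAC (expzKN dvr) mul1r.
  move=> [c [hc ->]]; exists (fun i => c i * pz (- g i)); split.
    by apply: eq_bigr => i _; rewrite tnth_mktuple scalerA.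
  by move=> i; rewrite mulrCA (expzKN dvr) mulr1.
- move=> x [y [/Dchar hy ->]]; apply/Mchar.
  have : scale_set (pz 1) (W h) (pi *: y) by exists y; rewrite expr1z.
  move/W_scale_set; apply: W_le => i; have := h_bounds i; lia.
- move=> x /Mchar hx; apply/Dchar; apply: W_le hx => i; have := h_bounds i; lia.
Qed.
End Main.

Definition rowmul (K : fieldType) n (c : 'I_n -> K) (A : 'M[K]_n) :=
  fun j => \sum_i c i * A i j.

Lemma rowmulK (K : fieldType) n (c : 'I_n -> K) (A A' : 'M[K]_n) :
  A *m A' = 1%:M -> forall i, rowmul (rowmul c A) A' i = c i.
Proof.
move=> hA i; have : (\row_l c l) *m A *m A' = \row_l c l by rewrite -mulmxA hA mulmx1.
move/(congr1 (fun M : 'M[K]_(1, n) => M 0 i)); rewrite !mxE => <-.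
apply: eq_bigr => j _; rewrite !mxE; congr (_ * _); apply: eq_bigr => l _.
by rewrite !mxE.
Qed.

Theorem theorem3p1p1 (K : fieldType) (V : vectType K)
  (R : K -> Prop) (pi : K) (B : V -> V -> K) (eps : K) (L : V -> Prop) :
  is_dvr_with_uniformizer R pi ->
  bilinear_form B -> nondegenerate_form B ->
  (eps = 1 \/ eps = -1) ->
  (forall x y, B x y = eps * B y x) ->
  lattice R L ->
  almost_self_dual R pi B (m_minus R pi L (dual R B L)) /\
  (forall x, dual R B (m_minus R pi L (dual R B L)) x <->
             m_plus pi L (dual R B L) x).
Proof.
move=> dvr bil nd heps sym [b [hb Lb]].
pose n := \dim {: V}.
case/andP: hb => /eqP hspan hfree.
pose Eb (r : 'I_n -> K) := \sum_i r i *: tnth b i.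
have Eb_surj x : exists r, x = Eb r.
  have : x \in <<b>>%VS by rewrite hspan memvf.
  move/coord_span => ->; exists (fun i => coord b i x).
  by apply: eq_bigr => i _; rewrite (tnth_nth 0).
have Eb_inj r r' : Eb r = Eb r' -> forall i, r i = r' i.
  move=> h i; apply/eqP; rewrite -subr_eq0; apply/eqP.
  move/freeP: hfree => hf; apply: (hf (fun j => r j - r' j)).
  rewrite (eq_bigr (fun j => r j *: tnth b j - r' j *: tnth b j)).
    by rewrite sumrB -/(Eb r) -/(Eb r') h subrr.
  by move=> j _; rewrite -(tnth_nth 0) scalerBl.
pose G : 'M[K]_n := \matrix_(i, j) B (tnth b i) (tnth b j).
have [P [Pi [S [Si [d [hP hPi hS hSi [ePP eSS eG]]]]]]] := smith dvr G.
have ePiP := mulmx1C ePP; have eSiS := mulmx1C eSS.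
pose e i := \sum_j Pi i j *: tnth b j.
have E_Eb c : E e c = Eb (rowmul c Pi).
  rewrite /E /e /Eb /rowmul.
  under eq_bigr do rewrite scaler_sumr.
  rewrite exchange_big; apply: eq_bigr => j _; rewrite scaler_suml.
  by apply: eq_bigr => i _; rewrite scalerA.
have Esurj x : exists c, x = E e c.
  have [r ->] := Eb_surj x; exists (rowmul r P); rewrite E_Eb.
  by apply: eq_bigr => j _; rewrite rowmulK.
have Einj c : E e c = 0 -> forall i, c i = 0.
  move=> h i; have h0 : Eb (rowmul c Pi) = Eb (fun _ => 0).
    by rewrite -E_Eb h /Eb big1 // => j _; rewrite scale0r.
  move: (Eb_inj _ _ h0); rewrite -(rowmulK c ePiP i) /rowmul => hz.
  by rewrite big1 // => j _; rewrite hz mul0r.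
have Lchar c : L (E e c) <-> forall i, R (c i).
  split.
    move/Lb => [r [hr]]; rewrite E_Eb => /Eb_inj h i.
    rewrite -(rowmulK c ePiP i); move: h; rewrite /rowmul => h.
    by apply: (Rsum dvr) => j _; rewrite h; apply: (RM dvr).
  move=> hc; apply/Lb; exists (rowmul c Pi); split; last exact: E_Eb.
  by move=> j; apply: (Rsum dvr) => i _; apply: (RM dvr).
have Bval c j : B (E e c) (tnth b j) = rowmul (fun i => c i * d 0 i) S j.
  have PiG : Pi *m G = diag_mx d *m S by rewrite eG !mulmxA ePiP mul1mx.
  rewrite /E (Bl_sum bil) /rowmul; apply: eq_bigr => i _.
  rewrite (BlZ bil) -mulrA; congr (_ * _).
  have := congr1 (fun M : 'M[K]_n => M i j) PiG; rewrite mul_diag_mx !mxE => <-.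
  rewrite /e (Bl_sum bil); apply: eq_bigr => k _; by rewrite (BlZ bil) mxE.
have Bdual x : dual R B L x <-> forall j, R (B x (tnth b j)).
  split.
    move=> hx j; apply: hx; apply/Lb; exists (fun k => if k == j then 1 else 0).
    split; first by move=> k; case: eqP => _; [apply: (R1 dvr) | apply: (R0 dvr)].
    rewrite (bigD1 j) //= eqxx scale1r big1 ?addr0 // => k /negPf ->.
    exact: scale0r.
  move=> hx y /Lb [r [hr ->]]; rewrite (Br_sum bil); apply: (Rsum dvr) => j _.
  by rewrite (BrZ bil); apply: (RM dvr).
have dn0 i : d 0 i != 0.
  apply/negP => /eqP di0.
  have ei0 : e i = 0.
    apply: nd.1 => y; have [r ->] := Eb_surj y.
    rewrite (Br_sum bil) big1 // => j _; rewrite (BrZ bil).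
    have := Bval (fun k => if k == i then 1 else 0) j.
    rewrite (E_delta e i 1) scale1r => ->; rewrite /rowmul big1 ?mulr0 // => k _.
    by case: eqP => [->|_]; rewrite ?di0 ?mulr0 !mul0r.
  have := Einj (fun k => if k == i then 1 else 0).
  rewrite (E_delta e i 1) scale1r ei0 => /(_ erefl i); rewrite eqxx => /eqP.
  by rewrite oner_eq0.
have : forall i, exists p : int * K, [/\ R p.2, R p.2^-1 & d 0 i = p.2 * pi ^ p.1].
  move=> i; have [k [u [hu hui ed]]] := Rdecomp dvr (dn0 i); by exists (k, u).
case/fin_all_exists => p hp.
have L'char c : dual R B L (E e c) <-> forall i, R (pi ^ (p i).1 * c i).
  rewrite Bdual; split.
    move=> h0 i; have [hu hui ed] := hp i.
    have h j : R (rowmul (fun i => c i * d 0 i) S j) by rewrite -Bval; apply: h0.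
    have : R (c i * d 0 i).
      rewrite -(rowmulK (fun i => c i * d 0 i) eSS i).
      change (R (\sum_j rowmul (fun i => c i * d 0 i) S j * Si j i)).
      by apply: (Rsum dvr) => j _; apply: (RM dvr).
    rewrite ed => h'.
    have -> : pi ^ (p i).1 * c i = (p i).2^-1 * (c i * ((p i).2 * pi ^ (p i).1)).
      have un0 : (p i).2 != 0.
        by apply: contraTneq (dn0 i) => u0; rewrite ed u0 mul0r eqxx.
      by rewrite [c i * _]mulrCA mulKf // mulrC.
    exact: (RM dvr).
  move=> h j; rewrite Bval; apply: (Rsum dvr) => i _; apply: (RM dvr) => //.
  have [hu hui ed] := hp i; rewrite ed mulrCA mulrC; apply: (RM dvr) => //.
  by rewrite mulrC; apply: h.
exact: (main_concl dvr bil nd heps sym Esurj Einj Lchar L'char).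
Qed.
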